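(* Let $\beta>0$, $N$ constant, $t>0$, and $(x,y)=r(\cos\phi,\sin\phi)$ with $r>0$. Set $\alpha=\beta r t$ and $\gamma=\cos(\phi/2)$. Define $$\psi_G=-\frac{N}{2\pi}\int_0^\infty\frac{dk}{k}\,J_0(A),\qquad A=\left[\left(kx+\frac{\beta t}{k}\right)^2+k^2y^2\right]^{1/2},$$ which is the Green's function of Proposition 3.1 with $k_d=0$. Then $$\psi_G=-\frac{N}{\pi}\int_0^\infty \frac{dz}{\sqrt{1+z^2}}\,J_0\!\left(2\sqrt{\alpha}\,(z^2+\gamma^2)^{1/2}\right).$$
   Context: $J_0$ is the Bessel function of the first kind of order zero. *)

(* Defs.v *)
From Stdlib Require Import Reals Lra Arith ClassicalEpsilon.
Open Scope R_scope.

(* The series converges for every x; we pick its sum via classical choice. *)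
Definition J0_term (x : R) (m : nat) : R :=
  (-1) ^ m / (INR (Factorial.fact m)) ^ 2 * (x / 2) ^ (2 * m).

Definition J0 (x : R) : R :=
  epsilon (inhabits 0) (fun l => infinite_sum (J0_term x) l).

Definition improper_int_0_inf (f : R -> R) (L : R) : Prop :=
  forall eps, 0 < eps ->
  exists delta M, 0 < delta /\
    forall a b, 0 < a -> a < delta -> M < b ->
      exists pr : Riemann_integrable f a b, Rabs (RiemannInt pr - L) < eps.

(* Main.v *)
Require Import Defs.
From Stdlib Require Import Reals Lra Lia Arith Factorial ClassicalEpsilon.
Import Factorial.
From Coquelicot Require Import Coquelicot.
Open Scope R_scope.


Definition ac (n:nat) : R := (-1)^n / (INR (fact n))^2.
Definition rc (n:nat) : R := (-1)^n / (INR (fact n) * INR (fact (S n))).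

Lemma INR_fact_pos n : 0 < INR (fact n).
Proof. apply lt_0_INR, lt_O_fact. Qed.

Lemma fact_S_R n : INR (fact (S n)) = INR (S n) * INR (fact n).
Proof. rewrite fact_simpl, mult_INR; reflexivity. Qed.

Lemma pow_m1_neq0 n : (-1)^n <> 0.
Proof. apply pow_nonzero; lra. Qed.

Lemma lim_inv_S : is_lim_seq (fun n => / INR (S n)) 0.
Proof.
  replace (Finite 0) with (Rbar_inv p_infty) by reflexivity.
  apply (is_lim_seq_inv (fun n => INR (S n))); [|discriminate].
  apply (is_lim_seq_incr_1 INR). apply is_lim_seq_INR.
Qed.

Lemma lim_inv_sq : is_lim_seq (fun n => / (INR (S n) * INR (S (S n)))) 0.
Proof.
  apply is_lim_seq_le_le with (u := fun _ => 0) (w := fun n => / INR (S n)).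
  - intro n. assert (H: 1 <= INR (S n)) by (apply (le_INR 1); lia).
    assert (H0: 1 <= INR (S (S n))) by (apply (le_INR 1); lia). split.
    + apply Rlt_le, Rinv_0_lt_compat; nra.
    + apply Rinv_le_contravar; nra.
  - apply is_lim_seq_const.
  - apply lim_inv_S.
Qed.

Lemma lim_inv_sq2 : is_lim_seq (fun n => / (INR (S n) * INR (S n))) 0.
Proof.
  apply is_lim_seq_le_le with (u := fun _ => 0) (w := fun n => / INR (S n)).
  - intro n. assert (H: 1 <= INR (S n)) by (apply (le_INR 1); lia). split.
    + apply Rlt_le, Rinv_0_lt_compat; nra.
    + apply Rinv_le_contravar; nra.
  - apply is_lim_seq_const.
  - apply lim_inv_S.
Qed.

Lemma CV_ac : CV_radius ac = p_infty.
Proof.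
  apply CV_radius_infinite_DAlembert.
  - intro n. unfold ac. pose proof (INR_fact_pos n). pose proof (pow_m1_neq0 n).
    apply Rmult_integral_contrapositive; split; auto. apply Rinv_neq_0_compat. apply pow_nonzero. lra.
  - eapply is_lim_seq_ext; [|apply lim_inv_sq2]. intro n.
    pose proof (INR_fact_pos n). pose proof (pow_m1_neq0 n).
    pose proof (lt_0_INR (S n) ltac:(lia)).
    assert (E: ac (S n) / ac n = - / (INR (S n) * INR (S n))).
    { unfold ac. rewrite fact_S_R. change ((-1)^(S n)) with (-1 * (-1)^n). field.
      split; [|split]; auto; apply Rgt_not_eq; auto. }
    rewrite E, Rabs_Ropp, Rabs_pos_eq; auto. apply Rlt_le, Rinv_0_lt_compat; nra.
Qed.

Lemma CV_rc : CV_radius rc = p_infty.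
Proof.
  apply CV_radius_infinite_DAlembert.
  - intro n. unfold rc. pose proof (INR_fact_pos n). pose proof (INR_fact_pos (S n)). pose proof (pow_m1_neq0 n).
    apply Rmult_integral_contrapositive; split; auto. apply Rinv_neq_0_compat. nra.
  - eapply is_lim_seq_ext; [|apply lim_inv_sq]. intro n.
    pose proof (INR_fact_pos n). pose proof (pow_m1_neq0 n).
    pose proof (lt_0_INR (S n) ltac:(lia)). pose proof (lt_0_INR (S (S n)) ltac:(lia)).
    assert (E: rc (S n) / rc n = - / (INR (S n) * INR (S (S n)))).
    { unfold rc. rewrite (fact_S_R (S n)), (fact_S_R n). change ((-1)^(S n)) with (-1 * (-1)^n). field.
      repeat split; auto; apply Rgt_not_eq; auto. }
    rewrite E, Rabs_Ropp, Rabs_pos_eq; auto. apply Rlt_le, Rinv_0_lt_compat; nra.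
Qed.

Definition Pw w := PSeries ac w.
Definition Rw w := PSeries rc w.
Definition Rd w := PSeries (PS_derive rc) w.

Lemma deq (f : R -> R) x l l' : is_derive f x l -> l = l' -> is_derive f x l'.
Proof. intros; subst; auto. Qed.

Lemma inr_lt w (a : nat -> R) : CV_radius a = p_infty -> Rbar_lt (Rabs w) (CV_radius a).
Proof. intro H; rewrite H; simpl; trivial. Qed.

Lemma dP w : is_derive Pw w (- Rw w).
Proof.
  eapply deq. apply is_derive_PSeries, inr_lt, CV_ac.
  unfold Rw. rewrite <- PSeries_opp. apply PSeries_ext. intro n.
  unfold PS_derive, PS_opp, ac, rc.
  rewrite !(fact_S_R n). pose proof (INR_fact_pos n). pose proof (lt_0_INR (S n) ltac:(lia)).
  change ((-1)^(S n)) with (-1 * (-1)^n). change (opp ?x) with (- x).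
  field. split; apply Rgt_not_eq; auto.
Qed.

Lemma dR w : is_derive Rw w (Rd w).
Proof. apply is_derive_PSeries, inr_lt, CV_rc. Qed.

Lemma RRd w : Rw w + w * Rd w = Pw w.
Proof.
  assert (H1 : is_derive (fun w => w * Rw w) w (Pw w)).
  { eapply is_derive_ext. intro t. unfold Rw. rewrite <- (PSeries_incr_1 rc t). reflexivity.
    eapply deq. apply is_derive_PSeries. rewrite CV_radius_incr_1. apply inr_lt, CV_rc.
    unfold Pw. apply PSeries_ext. intro n. unfold PS_derive, PS_incr_1, ac, rc.
    rewrite (fact_S_R n). pose proof (INR_fact_pos n). pose proof (lt_0_INR (S n) ltac:(lia)).
    field. split; apply Rgt_not_eq; auto. }
  assert (H2 : is_derive (fun w => w * Rw w) w (1 * Rw w + w * Rd w)).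
  { apply (is_derive_mult (fun w => w) Rw). apply (is_derive_id w). apply dR. intros; apply Rmult_comm. }
  apply is_derive_unique in H1. apply is_derive_unique in H2. rewrite H2 in H1. lra.
Qed.

Definition u x := Pw (x^2/4).
Definition v x := x/2 * Rw (x^2/4).

Lemma dsq x : is_derive (fun x => x^2/4) x (x/2).
Proof. auto_derive; auto; field. Qed.

Lemma du x : is_derive u x (- v x).
Proof.
  eapply deq. apply (is_derive_comp Pw (fun x => x^2/4)). apply dP. apply dsq.
  unfold v, scal; simpl; unfold mult; simpl. ring.
Qed.

Lemma dv x : is_derive v x (Pw (x^2/4) - Rw (x^2/4) / 2).
Proof.
  eapply deq. apply (is_derive_mult (fun x => x/2) (fun x => Rw (x^2/4))).
  auto_derive; auto. apply (is_derive_comp Rw (fun x => x^2/4)). apply dR. apply dsq.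
  intros; apply Rmult_comm.
  rewrite <- (RRd (x^2/4)). unfold scal, plus, mult; simpl; unfold mult; simpl. field.
Qed.

Definition En x := u x ^ 2 + v x ^ 2.

Lemma dE (x:R) : is_derive En x (- (x/2) * Rw (x^2/4) ^ 2).
Proof.
  eapply deq. apply (@is_derive_plus R_AbsRing). apply (is_derive_pow u). apply du.
  apply (is_derive_pow v). apply dv.
  change (plus ?a ?b) with (a + b). unfold u, v. simpl. set (a := Rw _). set (b := Pw _). clearbody a b. field.
Qed.

Lemma E0 : En 0 = 1.
Proof. unfold En, u, v. replace (0^2/4) with 0 by (simpl; field). unfold Pw. rewrite PSeries_0.
  unfold ac. simpl. field. Qed.

Lemma deriv_cont f x l : is_derive f x l -> continuity_pt f x.
Proof. intro H. apply continuity_pt_filterlim. apply (ex_derive_continuous f). exists l; auto. Qed.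

Lemma E_le x : 0 <= x -> En x <= 1.
Proof.
  intro Hx. destruct (MVT_gen En 0 x (fun x => - (x/2) * Rw (x^2/4) ^ 2)) as [c [Hc Heq]].
  - intros; apply dE.
  - intros; eapply deriv_cont; apply dE.
  - rewrite Rmin_left in Hc by lra. rewrite Rmax_right in Hc by lra.
    rewrite E0 in Heq. assert (0 <= Rw (c^2/4) ^2) by (apply pow2_ge_0).
    assert (0 <= c/2 * Rw (c^2/4) ^2 * x) by (apply Rmult_le_pos; [apply Rmult_le_pos|]; lra). nra.
Qed.

Lemma v_le x : 0 <= x -> Rabs (v x) <= 1.
Proof.
  intro Hx. pose proof (E_le x Hx). unfold En in H. pose proof (pow2_ge_0 (u x)).
  apply Rabs_le. nra.
Qed.

Lemma u_le x : Rabs (u x) <= 1.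
Proof.
  assert (u x = u (Rabs x)) by (unfold u; rewrite <- pow2_abs; auto).
  rewrite H. pose proof (E_le (Rabs x) (Rabs_pos x)). unfold En in H0. pose proof (pow2_ge_0 (v (Rabs x))).
  apply Rabs_le. nra.
Qed.

Lemma J0_u x : J0 x = u x.
Proof.
  assert (Hs : infinite_sum (J0_term x) (u x)).
  { apply is_series_Reals. unfold u.
    assert (Hp : is_pseries ac (x^2/4) (Pw (x^2/4))).
    { apply PSeries_correct. apply CV_radius_inside. rewrite CV_ac. simpl; trivial. }
    apply is_pseries_R in Hp. eapply is_series_ext; [|apply Hp]. intro n. simpl.
    unfold J0_term, ac. rewrite pow_mult. f_equal. f_equal. field. }
  unfold J0. apply (uniqueness_sum (J0_term x)); auto.
  apply (epsilon_spec (inhabits 0) (fun l => infinite_sum (J0_term x) l)). exists (u x); auto.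
Qed.

Lemma J0_le x : Rabs (J0 x) <= 1.
Proof. rewrite J0_u; apply u_le. Qed.

Lemma J0_cont (x:R) : continuous J0 x.
Proof. eapply continuous_ext. intro; symmetry; apply J0_u. apply (@ex_derive_continuous R_AbsRing R_NormedModule u x). exists (- v x). apply du. Qed.

Definition G x := x * v x.
Lemma dG (x:R) : is_derive G x (x * J0 x).
Proof.
  eapply deq. apply (is_derive_mult (fun x => x) v). apply (is_derive_id x). apply dv.
  intros; apply Rmult_comm. rewrite J0_u. unfold u, v, plus, mult; simpl. set (a := Rw _). set (b := Pw _). change (one:R) with 1. field.
Qed.

Lemma G_le x : 0 <= x -> Rabs (G x) <= x.
Proof. intro Hx. unfold G. rewrite Rabs_mult, Rabs_pos_eq by auto. pose proof (v_le x Hx).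
  pose proof (Rabs_pos (v x)). nra. Qed.

Lemma lim_from_cauchy (F : R -> R) (C : R) :
  (forall b1 b2, 1 <= b1 -> b1 <= b2 -> Rabs (F b2 - F b1) <= C / b1) ->
  exists L, forall eps, 0 < eps -> exists M, forall b, M < b -> Rabs (F b - L) < eps.
Proof.
  intro H.
  assert (HC : 0 <= C).
  { pose proof (H 1 1 ltac:(lra) ltac:(lra)). unfold Rminus in H0. rewrite Rplus_opp_r, Rabs_R0 in H0. lra. }
  set (Un := fun n : nat => F (INR n + 1)).
  assert (Key : forall N n m, (0 < N)%nat -> (N <= n)%nat -> (n <= m)%nat -> Rabs (Un m - Un n) <= C * / INR N).
  { intros N n m HN Hn Hm. unfold Un.
    assert (0 < INR N) by (apply lt_0_INR; lia).
    assert (INR N <= INR n) by (apply le_INR; lia). assert (INR n <= INR m) by (apply le_INR; lia).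
    eapply Rle_trans. apply H; lra. unfold Rdiv. apply Rmult_le_compat_l; auto.
    apply Rinv_le_contravar; lra. }
  assert (Hcc : Cauchy_crit Un).
  { intros eps Heps. destruct (archimed_cor1 (eps / (C + 1))) as [N [HN1 HN2]].
    { apply Rdiv_lt_0_compat; lra. }
    exists N. intros n m Hn Hm. unfold R_dist.
    assert (Hb : C * / INR N < eps).
    { assert (C * / INR N <= C * (eps / (C+1))) by (apply Rmult_le_compat_l; lra).
      assert (C * (eps / (C+1)) < eps).
      { unfold Rdiv. rewrite <- Rmult_assoc. apply (Rmult_lt_reg_r (C+1)); [lra|].
        rewrite Rmult_assoc, Rinv_l by lra. lra. }
      lra. }
    destruct (Compare_dec.le_lt_dec n m).
    - rewrite Rabs_minus_sym. eapply Rle_lt_trans; [apply (Key N n m)|]; auto; lia.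
    - eapply Rle_lt_trans; [apply (Key N m n)|]; auto; lia. }
  destruct (Stdlib.Reals.Rcomplete.R_complete Un Hcc) as [L HL]. exists L.
  intros eps Heps. destruct (HL (eps/2)) as [N1 HN1]; [lra|].
  exists (Rmax 1 (2 * C / eps)). intros b Hb.
  assert (Hb1 : 1 < b) by (eapply Rle_lt_trans; [apply Rmax_l|]; eauto).
  assert (Hb2 : 2 * C / eps < b) by (eapply Rle_lt_trans; [apply Rmax_r|]; eauto).
  destruct (archimed_cor1 (/ b)) as [N2 [HN2 HN2']]. { apply Rinv_0_lt_compat; lra. }
  assert (HbN2 : b < INR N2).
  { destruct (Rlt_le_dec b (INR N2)); auto. exfalso. assert (0 < INR N2) by (apply lt_0_INR; lia).
    assert (/ b <= / INR N2) by (apply Rinv_le_contravar; lra). lra. }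
  set (n := Nat.max N1 N2).
  assert (INR N2 <= INR n) by (apply le_INR; lia).
  assert (H1 : Rabs (Un n - F b) <= C / b) by (apply H; unfold Un; lra).
  assert (H2 : R_dist (Un n) L < eps / 2) by (apply HN1; lia).
  unfold R_dist in H2.
  assert (H3 : C / b < eps / 2).
  { apply (Rmult_lt_reg_r b); [lra|]. unfold Rdiv. rewrite Rmult_assoc, Rinv_l by lra.
    assert (2 * C < b * eps).
    { apply (Rmult_lt_compat_r eps) in Hb2; [|lra]. unfold Rdiv in Hb2.
      rewrite Rmult_assoc, Rinv_l in Hb2 by lra. lra. }
    nra. }
  replace (F b - L) with ((Un n - L) - (Un n - F b)) by ring.
  eapply Rle_lt_trans. apply Rabs_triang. rewrite Rabs_Ropp. lra.
Qed.

Definition g (K gam : R) (z : R) := / sqrt (1 + z^2) * J0 (K * sqrt (z^2 + gam^2)).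

Lemma cont_poly_sq (c : R) (z : R) : continuous (fun z => c + z^2) z.
Proof. apply (@ex_derive_continuous R_AbsRing R_NormedModule). auto_derive; auto. Qed.

Lemma sqrt1_pos z : 0 < sqrt (1 + z^2).
Proof. apply sqrt_lt_R0. pose proof (pow2_ge_0 z). lra. Qed.

Lemma sqrt1_ge1 z : 1 <= sqrt (1 + z^2).
Proof. apply Rle_trans with (sqrt 1); [rewrite sqrt_1; lra|]. apply sqrt_le_1_alt. pose proof (pow2_ge_0 z). lra. Qed.

Lemma g_cont K gam (z : R) : continuous (g K gam) z.
Proof.
  unfold g. apply (continuous_mult (fun z => / sqrt (1 + z^2)) (fun z => J0 (K * sqrt (z^2 + gam^2)))).
  - apply continuous_Rinv_comp. apply continuous_sqrt_comp. apply cont_poly_sq.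
    apply Rgt_not_eq, sqrt1_pos.
  - apply (continuous_comp (fun z => K * sqrt (z^2 + gam^2)) J0).
    + apply (continuous_mult (fun _ => K) (fun z => sqrt (z^2 + gam^2))). apply continuous_const.
      apply continuous_sqrt_comp. eapply continuous_ext; [|apply (cont_poly_sq (gam^2))].
      intro; simpl; ring.
    + apply J0_cont.
Qed.

Lemma g_bound K gam z : Rabs (g K gam z) <= 1.
Proof.
  unfold g. rewrite Rabs_mult. pose proof (J0_le (K * sqrt (z ^ 2 + gam ^ 2))).
  pose proof (sqrt1_ge1 z). rewrite Rabs_pos_eq. 2:{ apply Rlt_le, Rinv_0_lt_compat; lra. }
  assert (/ sqrt (1 + z^2) <= / 1) by (apply Rinv_le_contravar; lra). rewrite Rinv_1 in H1.
  pose proof (Rabs_pos (J0 (K * sqrt (z ^ 2 + gam ^ 2)))).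
  assert (0 < / sqrt (1 + z^2)) by (apply Rinv_0_lt_compat; lra).
  apply Rle_trans with (1*1); [apply Rmult_le_compat; lra | lra].
Qed.

Lemma g_even K gam z : g K gam (- z) = g K gam z.
Proof. unfold g. replace ((-z)^2) with (z^2) by ring. auto. Qed.

Lemma g_exRInt K gam a b : ex_RInt (g K gam) a b.
Proof. apply (@ex_RInt_continuous R_CompleteNormedModule). intros; apply g_cont. Qed.

Definition Phi K gam s := RInt (g K gam) 0 s.

Lemma Phi_deriv K gam (s : R) : is_derive (Phi K gam) s (g K gam s).
Proof.
  apply is_derive_RInt with (a := 0). apply filter_forall. intro b.
  apply RInt_correct, g_exRInt. apply g_cont.
Qed.

Lemma Phi_diff K gam a b : RInt (g K gam) a b = Phi K gam b - Phi K gam a.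
Proof.
  pose proof (RInt_Chasles (V:=R_CompleteNormedModule) (g K gam) 0 a b (g_exRInt _ _ _ _) (g_exRInt _ _ _ _)) as H.
  change (plus ?x ?y) with (x+y) in H. unfold Phi. simpl in *. lra.
Qed.

Lemma const_of_deriv0 (F : R -> R) : (forall x, is_derive F x 0) -> forall a b, F b = F a.
Proof.
  intros H a b. destruct (MVT_gen F a b (fun _ => 0)) as [c [_ Hc]].
  intros; apply H. intros; eapply deriv_cont; apply H. lra.
Qed.

Lemma Phi_odd K gam s : Phi K gam (- s) = - Phi K gam s.
Proof.
  assert (H : forall x, is_derive (fun s => Phi K gam (- s) + Phi K gam s) x 0).
  { intro x. eapply deq. apply (@is_derive_plus R_AbsRing).
    apply (is_derive_comp (Phi K gam) (fun s => - s)). apply Phi_deriv.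
    apply (@is_derive_opp R_AbsRing). apply is_derive_id. apply Phi_deriv.
    rewrite g_even. change (plus ?x ?y) with (x + y). change (scal ?x ?y) with (x * y).
    change (opp ?x) with (- x). change (one : R) with 1. simpl; lra. }
  pose proof (const_of_deriv0 _ H 0 s). simpl in H0. unfold Phi in H0 at 3 4.
  rewrite Ropp_0, RInt_point in H0. change (zero : R) with 0 in H0. lra.
Qed.

Definition h K z := / (K^2 * z * sqrt (1 + z^2)).
Definition hd K z := - (2 * z^2 + 1) / (K^2 * z^2 * sqrt (1+z^2) ^ 3).

Lemma sq_fact z : sqrt (1 + z^2) * sqrt (1 + z^2) = 1 + z^2.
Proof. apply sqrt_sqrt. pose proof (pow2_ge_0 z); lra. Qed.

Lemma dh K (z : R) : 0 < K -> 0 < z -> is_derive (h K) z (hd K z).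
Proof.
  intros HK Hz. unfold h, hd. pose proof (sqrt1_pos z). pose proof (sq_fact z). auto_derive.
  - replace (z * (z*1)) with (z^2) by ring. repeat split; try nra.
    apply Rmult_integral_contrapositive; split; [|lra]. apply Rmult_integral_contrapositive; split; nra.
  - replace (z * (z*1)) with (z^2) by ring. set (s := sqrt (1 + z^2)) in *.
    replace (2 * z^2 + 1) with (s * s + z^2) by lra. field. repeat split; nra.
Qed.

Definition Psi K gam z := G (K * sqrt (z^2 + gam^2)).
Definition W K gam z := Psi K gam z * h K z.
Definition q K gam z := Psi K gam z * hd K z.

Lemma wpos gam z : 0 < z -> 0 < sqrt (z^2 + gam^2).
Proof. intro. apply sqrt_lt_R0. pose proof (pow2_ge_0 gam). nra. Qed.

Lemma dPsi K gam (z : R) : 0 < z -> is_derive (Psi K gam) z (K^2 * z * J0 (K * sqrt (z^2+gam^2))).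
Proof.
  intro Hz. pose proof (wpos gam z Hz). eapply deq.
  apply (is_derive_comp G (fun z => K * sqrt (z^2+gam^2)) z (K * sqrt (z^2+gam^2) * J0 (K * sqrt (z^2+gam^2))) (K * (z / sqrt (z^2+gam^2)))). apply dG.
  auto_derive. pose proof (pow2_ge_0 gam). nra.
  replace (gam * (gam*1)) with (gam^2) by ring. replace (z * (z*1)) with (z^2) by ring. field. lra.
  change (scal ?x ?y) with (x * y).
  set (w := sqrt (z^2 + gam^2)) in *. unfold scal; simpl; unfold mult; simpl. field. lra.
Qed.

Lemma dW K gam (z : R) : 0 < K -> 0 < z -> is_derive (W K gam) z (g K gam z + q K gam z).
Proof.
  intros HK Hz. eapply deq. apply (is_derive_mult (Psi K gam) (h K)).
  apply dPsi; auto. apply dh; auto. intros; apply Rmult_comm.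
  change (plus ?x ?y) with (x + y). change (mult ?x ?y) with (x * y).
  simpl; unfold g, q, h. pose proof (sqrt1_pos z). replace (z*(z*1)) with (z^2) by ring. replace (gam*(gam*1)) with (gam^2) by ring. field. repeat split; apply Rgt_not_eq; auto.
Qed.

Lemma cont_of_der (f : R -> R) (z l : R) : is_derive f z l -> continuous f z.
Proof. intro H. apply (@ex_derive_continuous R_AbsRing R_NormedModule). exists l; auto. Qed.

Lemma q_cont K gam (z : R) : 0 < K -> 0 < z -> continuous (q K gam) z.
Proof.
  intros HK Hz. apply (continuous_mult (Psi K gam) (hd K)).
  eapply cont_of_der; apply dPsi; auto.
  apply (@ex_derive_continuous R_AbsRing R_NormedModule). unfold hd. pose proof (sqrt1_pos z).
  auto_derive. replace (z * (z*1)) with (z^2) by ring. set (s := sqrt (1 + z^2)) in *.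
  repeat split; try nra.
  assert (0 < s * (s * (s * 1))) by (repeat apply Rmult_lt_0_compat; lra).
  assert (0 < K * (K * 1) * z^2) by (repeat apply Rmult_lt_0_compat; nra).
  apply Rgt_not_eq. apply Rmult_lt_0_compat; auto.
Qed.

Lemma exRInt_q K gam a b : 0 < K -> 0 < a -> a <= b -> ex_RInt (q K gam) a b.
Proof.
  intros. apply (@ex_RInt_continuous R_CompleteNormedModule). intros z Hz.
  rewrite Rmin_left in Hz by lra. apply q_cont; lra.
Qed.

Lemma int_by_parts K gam b1 b2 : 0 < K -> 0 < b1 -> b1 <= b2 ->
  RInt (g K gam) b1 b2 = (W K gam b2 - W K gam b1) - RInt (q K gam) b1 b2.
Proof.
  intros HK Hb1 Hb12.
  assert (H : is_RInt (fun z => g K gam z + q K gam z) b1 b2 (W K gam b2 - W K gam b1)).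
  { apply (is_RInt_derive (V:=R_CompleteNormedModule) (W K gam)).
    - intros z Hz. rewrite Rmin_left in Hz by lra. apply dW; lra.
    - intros z Hz. rewrite Rmin_left in Hz by lra.
      apply (continuous_plus (V:=R_NormedModule) (g K gam) (q K gam)). apply g_cont. apply q_cont; lra. }
  apply (is_RInt_unique (V:=R_CompleteNormedModule)) in H.
  rewrite (RInt_plus (V:=R_CompleteNormedModule) (g K gam) (q K gam)) in H.
  change (plus ?x ?y) with (x + y) in H. simpl in *. lra.
  apply g_exRInt. apply exRInt_q; lra.
Qed.

Lemma Psi_bound K gam z : 0 < K -> gam^2 <= 1 -> Rabs (Psi K gam z) <= K * sqrt (1 + z^2).
Proof.
  intros HK Hg. unfold Psi.
  assert (0 <= sqrt (z^2 + gam^2)) by apply sqrt_pos.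
  assert (sqrt (z^2 + gam^2) <= sqrt (1 + z^2)) by (apply sqrt_le_1_alt; lra).
  eapply Rle_trans. apply G_le. apply Rmult_le_pos; lra. apply Rmult_le_compat_l; lra.
Qed.

Lemma W_bound K gam z : 0 < K -> gam^2 <= 1 -> 0 < z -> Rabs (W K gam z) <= / (K * z).
Proof.
  intros HK Hg Hz. unfold W. rewrite Rabs_mult. pose proof (sqrt1_pos z).
  assert (Hh : 0 < h K z) by (unfold h; apply Rinv_0_lt_compat; repeat apply Rmult_lt_0_compat; nra).
  rewrite (Rabs_pos_eq (h K z)) by lra.
  eapply Rle_trans. apply Rmult_le_compat_r. lra. apply Psi_bound; auto.
  unfold h. right. field. repeat split; apply Rgt_not_eq; auto.
Qed.

Lemma q_bound K gam z : 0 < K -> gam^2 <= 1 -> 0 < z -> Rabs (q K gam z) <= 2 / (K * z^2).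
Proof.
  intros HK Hg Hz. unfold q. rewrite Rabs_mult. pose proof (sqrt1_pos z). pose proof (sq_fact z).
  set (s := sqrt (1 + z^2)) in *.
  assert (Hs3 : 0 < s^3) by (apply pow_lt; lra).
  assert (Hz2 : 0 < z^2) by nra.
  assert (Hhd : hd K z = - ((2 * z^2 + 1) / (K^2 * z^2 * (s * (1 + z^2))))).
  { unfold hd. fold s. replace (s^3) with (s * (1 + z^2)) by (rewrite <- H0; ring). field.
    repeat split; apply Rgt_not_eq; nra. }
  rewrite Hhd, Rabs_Ropp.
  assert (HX : 0 < (2 * z^2 + 1) / (K^2 * z^2 * (s * (1 + z^2)))).
  { apply Rdiv_lt_0_compat. nra. repeat apply Rmult_lt_0_compat; nra. }
  rewrite (Rabs_pos_eq _ (Rlt_le _ _ HX)).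
  eapply Rle_trans. apply Rmult_le_compat_r. lra. apply Psi_bound; auto. fold s.
  replace (K * s * ((2 * z ^ 2 + 1) / (K ^ 2 * z ^ 2 * (s * (1 + z ^ 2)))))
    with (2 / (K * z^2) - / (K * z^2 * (1 + z^2))) by (field; repeat split; apply Rgt_not_eq; nra).
  assert (0 < / (K * z^2 * (1 + z^2))) by (apply Rinv_0_lt_compat; repeat apply Rmult_lt_0_compat; nra).
  lra.
Qed.

Lemma tail K gam b1 b2 : 0 < K -> gam^2 <= 1 -> 1 <= b1 -> b1 <= b2 ->
  Rabs (Phi K gam b2 - Phi K gam b1) <= (4 / K) / b1.
Proof.
  intros HK Hg Hb1 Hb12. rewrite <- Phi_diff. rewrite int_by_parts by lra.
  set (Dd := fun z => 2 / (K * z^2)).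
  assert (HI : is_RInt Dd b1 b2 (-2 / (K * b2) - -2 / (K * b1))).
  { apply (is_RInt_derive (V:=R_CompleteNormedModule) (fun z => -2 / (K * z))).
    - intros z Hz. rewrite Rmin_left in Hz by lra. rewrite Rmax_right in Hz by lra.
      unfold Dd. auto_derive. apply Rgt_not_eq; nra. field. split; apply Rgt_not_eq; nra.
    - intros z Hz. rewrite Rmin_left in Hz by lra. rewrite Rmax_right in Hz by lra.
      apply (@ex_derive_continuous R_AbsRing R_NormedModule). unfold Dd. auto_derive.
      apply Rgt_not_eq, Rmult_lt_0_compat; [lra|nra]. }
  assert (HexD : ex_RInt Dd b1 b2) by (eexists; eauto).
  apply (is_RInt_unique (V:=R_CompleteNormedModule)) in HI.
  assert (Hq : ex_RInt (q K gam) b1 b2) by (apply exRInt_q; lra).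
  assert (Hup : RInt (q K gam) b1 b2 <= RInt Dd b1 b2).
  { apply RInt_le; auto. intros z Hz. pose proof (q_bound K gam z HK Hg ltac:(lra)).
    apply Rabs_le_between in H. unfold Dd. lra. }
  assert (Hlo : RInt (fun z => - Dd z) b1 b2 <= RInt (q K gam) b1 b2).
  { apply RInt_le; auto. apply (ex_RInt_opp (V:=R_NormedModule)); auto.
    intros z Hz. pose proof (q_bound K gam z HK Hg ltac:(lra)).
    apply Rabs_le_between in H. unfold Dd. lra. }
  rewrite (RInt_opp (V:=R_CompleteNormedModule) Dd) in Hlo by auto.
  change (opp ?x) with (- x) in Hlo. simpl in HI. rewrite HI in Hup, Hlo.
  pose proof (W_bound K gam b1 HK Hg ltac:(lra)). pose proof (W_bound K gam b2 HK Hg ltac:(lra)).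
  assert (/ (K * b2) <= / (K * b1)) by (apply Rinv_le_contravar; nra).
  assert (0 < / (K * b2)) by (apply Rinv_0_lt_compat; nra).
  assert (E1 : -2 / (K * b2) = - 2 * / (K * b2)) by (unfold Rdiv; ring).
  assert (E2 : -2 / (K * b1) = - 2 * / (K * b1)) by (unfold Rdiv; ring).
  assert (E3 : 4 / K / b1 = 4 * / (K * b1)) by (field; split; apply Rgt_not_eq; lra).
  rewrite E1, E2 in *. rewrite E3.
  apply Rabs_le_between in H. apply Rabs_le_between in H0.
  apply Rabs_le. lra.
Qed.

Section Alg.
Variables beta t r phi : R.
Hypotheses (hbeta : 0 < beta) (ht : 0 < t) (hr : 0 < r).

Definition cc := sqrt (r / (beta * t)).
Definition zf k := (cc * k - / (cc * k)) / 2.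
Definition zd k := (cc + / (cc * k^2)) / 2.
Definition KK := 2 * sqrt (beta * r * t).
Definition gm := cos (phi / 2).
Definition ff k := / k * J0 (sqrt ((k * (r * cos phi) + beta * t / k) ^ 2 + k ^ 2 * (r * sin phi) ^ 2)).

Lemma cc_pos : 0 < cc.
Proof. unfold cc. apply sqrt_lt_R0. apply Rdiv_lt_0_compat; nra. Qed.

Lemma cc2 : cc ^ 2 = r / (beta * t).
Proof. unfold cc. simpl. rewrite Rmult_1_r. apply sqrt_sqrt. apply Rlt_le, Rdiv_lt_0_compat; nra. Qed.

Lemma KK2 : KK ^ 2 = 4 * (beta * r * t).
Proof. unfold KK. replace ((2 * sqrt (beta * r * t))^2) with (4 * (sqrt (beta*r*t) * sqrt (beta*r*t))) by ring.
  rewrite sqrt_sqrt; auto. apply Rlt_le; repeat apply Rmult_lt_0_compat; auto. Qed.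

Lemma KK_pos : 0 < KK.
Proof. unfold KK. apply Rmult_lt_0_compat; [lra|]. apply sqrt_lt_R0; repeat apply Rmult_lt_0_compat; auto. Qed.

Lemma poly_eq k : 0 < k ->
  (k * (r * cos phi) + beta * t / k) ^ 2 + k ^ 2 * (r * sin phi) ^ 2 = KK^2 * (zf k ^ 2 + gm ^ 2).
Proof.
  intro Hk. pose proof cc_pos. rewrite KK2.
  assert (E1 : (k * (r * cos phi) + beta * t / k) ^ 2 + k ^ 2 * (r * sin phi) ^ 2
     = k^2 * r^2 * ((sin phi)² + (cos phi)²) + 2 * r * beta * t * cos phi + beta^2 * t^2 / k^2).
  { unfold Rsqr. field. lra. }
  rewrite sin2_cos2 in E1. rewrite E1.
  assert (Ecos : cos phi = 2 * gm^2 - 1).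
  { unfold gm. replace phi with (2 * (phi/2)) at 1 by field. rewrite cos_2a_cos. ring. }
  assert (E2 : 4 * (beta * r * t) * (zf k ^ 2 + gm ^ 2)
     = (beta * r * t) * (cc^2 * k^2) - 2 * (beta * r * t) + (beta * r * t) / (cc^2 * k^2)
       + 4 * (beta * r * t) * gm^2).
  { unfold zf. field. split; apply Rgt_not_eq; auto. }
  rewrite E2, cc2, Ecos. field. repeat split; apply Rgt_not_eq; auto.
Qed.

Lemma sqrt_eq k : 0 < k ->
  sqrt ((k * (r * cos phi) + beta * t / k) ^ 2 + k ^ 2 * (r * sin phi) ^ 2) = KK * sqrt (zf k ^ 2 + gm ^ 2).
Proof.
  intro Hk. rewrite poly_eq by auto. pose proof KK_pos.
  rewrite sqrt_mult. rewrite sqrt_pow2 by lra. auto.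
  apply pow2_ge_0. pose proof (pow2_ge_0 (zf k)). pose proof (pow2_ge_0 gm). lra.
Qed.

Lemma jac_eq k : 0 < k -> / sqrt (1 + zf k ^ 2) * zd k = / k.
Proof.
  intro Hk. pose proof cc_pos.
  assert (Hp : 0 < (cc * k + / (cc * k)) / 2).
  { assert (0 < / (cc * k)) by (apply Rinv_0_lt_compat; nra). nra. }
  assert (E : 1 + zf k ^ 2 = ((cc * k + / (cc * k)) / 2) ^ 2).
  { unfold zf. field. split; apply Rgt_not_eq; auto. }
  rewrite E, sqrt_pow2 by lra. unfold zd. field. repeat split; apply Rgt_not_eq; nra.
Qed.

Lemma ff_eq k : 0 < k -> ff k = g KK gm (zf k) * zd k.
Proof.
  intro Hk. unfold ff, g. rewrite sqrt_eq by auto. rewrite <- (jac_eq k Hk). ring.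
Qed.

Lemma dzf (k : R) : 0 < k -> is_derive zf k (zd k).
Proof. intro Hk. pose proof cc_pos. unfold zf, zd. auto_derive.
  apply Rgt_not_eq; nra. field. split; apply Rgt_not_eq; auto. Qed.

End Alg.

Lemma Phi_small K gam a : 0 <= a -> Rabs (Phi K gam a) <= a.
Proof.
  intro Ha. unfold Phi.
  assert (H1 : RInt (g K gam) 0 a <= RInt (fun _ => 1) 0 a).
  { apply RInt_le; auto. apply g_exRInt. apply ex_RInt_const.
    intros; pose proof (g_bound K gam x); apply Rabs_le_between in H0; lra. }
  assert (H2 : RInt (fun _ => -1) 0 a <= RInt (g K gam) 0 a).
  { apply RInt_le; auto. apply ex_RInt_const. apply g_exRInt.
    intros; pose proof (g_bound K gam x); apply Rabs_le_between in H0; lra. }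
  rewrite RInt_const in H1, H2. change (scal ?x ?y) with (x * y) in H1, H2.
  apply Rabs_le. lra.
Qed.

Definition conv_to (F : R -> R) L := forall eps, 0 < eps -> exists M, forall b, M < b -> Rabs (F b - L) < eps.

Lemma improper_g K gam L : conv_to (Phi K gam) L -> improper_int_0_inf (g K gam) L.
Proof.
  intros HL eps Heps. destruct (HL (eps/2)) as [M HM]; [lra|].
  exists (Rmin 1 (eps/2)), (Rmax M 1). split.
  { apply Rmin_glb_lt; lra. }
  intros a b Ha Had Hb.
  assert (Ha1 : a < 1) by (eapply Rlt_le_trans; [apply Had|apply Rmin_l]).
  assert (Ha2 : a < eps/2) by (eapply Rlt_le_trans; [apply Had|apply Rmin_r]).
  assert (Hb1 : 1 < b) by (eapply Rle_lt_trans; [apply Rmax_r|apply Hb]).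
  assert (Hb2 : M < b) by (eapply Rle_lt_trans; [apply Rmax_l|apply Hb]).
  exists (ex_RInt_Reals_0 _ _ _ (g_exRInt K gam a b)).
  rewrite <- RInt_Reals. rewrite Phi_diff.
  pose proof (Phi_small K gam a ltac:(lra)). pose proof (HM b Hb2).
  replace (Phi K gam b - Phi K gam a - L) with ((Phi K gam b - L) - Phi K gam a) by ring.
  eapply Rle_lt_trans. apply Rabs_triang. rewrite Rabs_Ropp. lra.
Qed.

Lemma ff_cont beta t r phi (k : R) : 0 < k -> continuous (ff beta t r phi) k.
Proof.
  intro Hk. unfold ff.
  apply (continuous_mult (fun k => / k) (fun k => J0 (sqrt ((k * (r * cos phi) + beta * t / k) ^ 2 + k ^ 2 * (r * sin phi) ^ 2)))).
  apply continuous_Rinv; lra.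
  apply (continuous_comp (fun k => sqrt ((k * (r * cos phi) + beta * t / k) ^ 2 + k ^ 2 * (r * sin phi) ^ 2)) J0).
  apply continuous_sqrt_comp. apply (@ex_derive_continuous R_AbsRing R_NormedModule).
  auto_derive. lra. apply J0_cont.
Qed.

Lemma ff_int beta t r phi a b : 0 < beta -> 0 < t -> 0 < r -> 0 < a -> a <= b ->
  is_RInt (ff beta t r phi) a b
    (Phi (KK beta t r) (gm phi) (zf beta t r b) - Phi (KK beta t r) (gm phi) (zf beta t r a)).
Proof.
  intros hb ht hr Ha Hab.
  apply (is_RInt_derive (V:=R_CompleteNormedModule) (fun k => Phi (KK beta t r) (gm phi) (zf beta t r k))).
  - intros k Hk. rewrite Rmin_left in Hk by lra. eapply deq.
    apply (is_derive_comp (Phi (KK beta t r) (gm phi)) (zf beta t r)). apply Phi_deriv. apply dzf; auto; lra.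
    change (scal ?x ?y) with (x * y). rewrite ff_eq by (auto; lra). simpl. ring.
  - intros k Hk. rewrite Rmin_left in Hk by lra. apply ff_cont. lra.
Qed.

Lemma improper_f beta t r phi L : 0 < beta -> 0 < t -> 0 < r ->
  conv_to (Phi (KK beta t r) (gm phi)) L -> improper_int_0_inf (ff beta t r phi) (2 * L).
Proof.
  intros hb ht hr HL eps Heps. destruct (HL (eps/2)) as [M0 HM0]; [lra|].
  set (Ph := Phi (KK beta t r) (gm phi)) in *.
  pose proof (cc_pos beta t r hb ht hr) as Hc. set (c := cc beta t r) in *.
  set (M1 := Rmax M0 1).
  assert (HM1 : 1 <= M1) by apply Rmax_r. assert (HM0' : M0 <= M1) by apply Rmax_l.
  exists (/ (c * (2 * M1 + 1))), ((2 * M1 + 1) / c). split.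
  { apply Rinv_0_lt_compat. nra. }
  intros a b Ha Had Hb.
  assert (Hca : c * a < / (2 * M1 + 1)).
  { apply (Rmult_lt_compat_l c) in Had; auto. replace (c * / (c * (2 * M1 + 1))) with (/ (2 * M1 + 1)) in Had.
    auto. field. split; lra. }
  assert (Hcb : 2 * M1 + 1 < c * b).
  { apply (Rmult_lt_compat_l c) in Hb; auto. replace (c * ((2 * M1 + 1) / c)) with (2 * M1 + 1) in Hb.
    auto. field. lra. }
  assert (Hinv3 : / (2 * M1 + 1) <= / 3) by (apply Rinv_le_contravar; lra).
  assert (Hca0 : 0 < c * a) by nra.
  assert (Hia : 2 * M1 + 1 < / (c * a)).
  { rewrite <- (Rinv_inv (2 * M1 + 1)). apply Rinv_lt_contravar. apply Rmult_lt_0_compat; auto.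
    apply Rinv_0_lt_compat; lra. auto. }
  assert (Hib : / (c * b) < 1).
  { rewrite <- Rinv_1. apply Rinv_lt_contravar; lra. }
  assert (Hab : a <= b).
  { assert (c * a < c * b) by lra. apply Rmult_lt_reg_l in H; lra. }
  assert (Hza : M0 < - zf beta t r a) by (unfold zf; fold c; lra).
  assert (Hzb : M0 < zf beta t r b) by (unfold zf; fold c; lra).
  pose proof (ff_int beta t r phi a b hb ht hr Ha Hab) as HI.
  exists (ex_RInt_Reals_0 _ _ _ (ex_intro _ _ HI)).
  rewrite <- RInt_Reals. rewrite (is_RInt_unique (V:=R_CompleteNormedModule) _ _ _ _ HI).
  fold Ph. pose proof (HM0 _ Hza). pose proof (HM0 _ Hzb).
  unfold Ph in H. rewrite Phi_odd in H. fold Ph in H.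
  replace (Ph (zf beta t r b) - Ph (zf beta t r a) - 2 * L)
    with ((Ph (zf beta t r b) - L) + (- Ph (zf beta t r a) - L)) by ring.
  eapply Rle_lt_trans. apply Rabs_triang. lra.
Qed.

Theorem mainTheorem5 (beta N t r phi : R)
  (hbeta : 0 < beta) (ht : 0 < t) (hr : 0 < r) :
  let x := r * cos phi in
  let y := r * sin phi in
  let alpha := beta * r * t in
  let gamma := cos (phi / 2) in
  exists LG LR : R,
    improper_int_0_inf
      (fun k => / k * J0 (sqrt ((k * x + beta * t / k) ^ 2 + k ^ 2 * y ^ 2))) LG /\
    improper_int_0_inf
      (fun z => / sqrt (1 + z ^ 2) * J0 (2 * sqrt alpha * sqrt (z ^ 2 + gamma ^ 2))) LR /\
    - N / (2 * PI) * LG = - N / PI * LR.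
Proof.
  intros x y alpha gamma.
  pose proof (KK_pos beta t r hbeta ht hr) as HK.
  assert (Hg : gm phi ^ 2 <= 1).
  { unfold gm. pose proof (COS_bound (phi/2)). nra. }
  destruct (lim_from_cauchy (Phi (KK beta t r) (gm phi)) (4 / KK beta t r)) as [L HL].
  { intros b1 b2 H1 H2. apply tail; auto. }
  exists (2 * L), L. split; [|split].
  - change (improper_int_0_inf (ff beta t r phi) (2 * L)). apply improper_f; auto.
  - change (improper_int_0_inf (g (KK beta t r) (gm phi)) L). apply improper_g; auto.
  - field. apply PI_neq0.
Qed.
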